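(* Let $T>0$ and let $d_M,d_I:\mathbb{R}\to(0,\infty)$, $D_I:\mathbb{R}\to[0,\infty)$, $\tau:\mathbb{R}\to(0,\infty)$, $p:\mathbb{R}\to[0,\infty)$ be $C^1$ and $T$-periodic, and let $h\in C^1([0,\infty);[0,\infty))$. Assume: (a) there are numbers $0<\alpha\le\beta<t_\alpha\le t_\beta<T$ with $t_\alpha-\tau(t_\alpha)=\alpha$, $t_\beta-\tau(t_\beta)=\beta$, and $p(t)=0$ for $t\in[0,\alpha]\cup[\beta,T]$; (b) $\tau'(t)<1$ for all $t\in\mathbb{R}$; (c) $h(0)=0$, $\lim_{z\to+\infty}h(z)=0$, and there is $z^*>0$ such that $h$ is increasing on $[0,z^* )$ and decreasing on $[z^*,+\infty)$; (d) $h(\lambda z)\ge\lambda h(z)$ for all $z\ge0$, $\lambda\in(0,1)$. Define $\overline{k}_M(t,s)=e^{-\int_s^t d_M(\omega)d\omega}$, $\varepsilon(s)=e^{-\int_{s-\tau(s)}^{s}d_I(\omega)d\omega}$, $g(s)=(1-\tau'(s))\varepsilon(s)p(s-\tau(s))$, and the map $\overline{Q}:[0,\infty)\to[0,\infty)$, $$\overline{Q}[z]=z\,\overline{k}_M(T,0)+\int_{t_\alpha}^{t_\beta}\overline{k}_M(T,s)\,g(s)\,h\big(z\,\overline{k}_M(s-\tau(s),0)\big)\,ds,$$ and the number $$L=\frac{\overline{k}_M(T,0)}{1-\overline{k}_M(T,0)}\int_{t_\alpha}^{t_\beta}\frac{g(s)h'(0)}{\overline{k}_M(s,s-\tau(s))}\,ds.$$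 Then: (i) If $L>1$, then $\overline{Q}$ admits at least one positive fixed point; denoting the minimal positive fixed point by $u^*$, one has $\lim_{n\to\infty}\overline{Q}^n[u]=u^*$ provided that $u\in(0,u^*]$ and $u^*\,\overline{k}_M(\alpha,0)\le z^*$. (ii) If $L<1$, then $\lim_{n\to\infty}\overline{Q}^n[u]=0$ for every $u\ge0$.
   Context: $\overline{Q}$ is the restriction to constant functions of the yearly (time-$T$) map of the mature-population equation of a stage-structured reaction–diffusion model with periodic maturation delay $\tau(t)$, birth rate $b(t,u)=p(t)h(u)$, breeding season $[\alpha,\beta]$ and maturation season $[t_\alpha,t_\beta]$. $\overline{Q}^n$ denotes the $n$-th iterate. *)

(* Defs.v *)
From Stdlib Require Import Reals.
From Coquelicot Require Export Coquelicot.
Open Scope R_scope.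

Definition isC1 (f : R -> R) : Prop :=
  forall x, ex_derive f x /\ continuous (Derive f) x.

Definition periodic (T : R) (f : R -> R) : Prop := forall t, f (t + T) = f t.

Definition kM (dM : R -> R) (t s : R) : R := exp (- RInt dM s t).

Definition eps (dI tau : R -> R) (s : R) : R := exp (- RInt dI (s - tau s) s).

Definition gfun (dI tau p : R -> R) (s : R) : R :=
  (1 - Derive tau s) * eps dI tau s * p (s - tau s).

Definition Qbar (T ta tb : R) (dM dI tau p h : R -> R) (z : R) : R :=
  z * kM dM T 0 +
  RInt (fun s => kM dM T s * gfun dI tau p s * h (z * kM dM (s - tau s) 0)) ta tb.

(* the threshold number L, with h0' = h'(0) *)
Definition Lnum (T ta tb : R) (dM dI tau p : R -> R) (h0' : R) : R :=
  kM dM T 0 / (1 - kM dM T 0) *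
  RInt (fun s => gfun dI tau p s * h0' / kM dM s (s - tau s)) ta tb.

(* Main.v *)
Require Import Defs.
From Stdlib Require Import Reals Lra Classical.
From Coquelicot Require Import Coquelicot.
Open Scope R_scope.

Lemma loc_R (x : R) (P : R -> Prop) :
  locally x P -> exists d, 0 < d /\ forall y, Rabs (y - x) < d -> P y.
Proof.
  intros [d Hd]. exists d. split. apply cond_pos. intros y Hy. apply Hd. exact Hy.
Qed.

Lemma h_ratio (h : R -> R) :
  (forall z lam, 0 <= z -> 0 < lam < 1 -> lam * h z <= h (lam * z)) ->
  forall x y, 0 < x -> x <= y -> x * h y <= y * h x.
Proof.
  intros Hd x y Hx Hxy.
  destruct (Req_dec x y) as [->|Hne]; [lra|].
  assert (Hy : 0 < y) by lra.
  assert (Hl : 0 < x / y < 1).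
  { split. apply Rdiv_lt_0_compat; lra.
    apply (Rmult_lt_reg_r y); [lra|]. field_simplify; lra. }
  pose proof (Hd y (x / y) ltac:(lra) Hl) as H.
  replace (x / y * y) with x in H by (field; lra).
  apply (Rmult_le_compat_l y) in H; [|lra].
  replace (y * (x / y * h y)) with (x * h y) in H by (field; lra). lra.
Qed.

Lemma h_der0_eps (h hd : R -> R) :
  h 0 = 0 ->
  filterlim (fun y => (h y - h 0) / y) (at_right 0) (locally (hd 0)) ->
  forall eps, 0 < eps -> exists delta, 0 < delta /\
    forall y, 0 < y < delta -> Rabs (h y / y - hd 0) < eps.
Proof.
  intros H0 Hl eps Heps.
  destruct (Hl (ball (hd 0) (mkposreal eps Heps)) (locally_ball _ _)) as [d Hd].
  exists d. split. apply cond_pos. intros y [Hy1 Hy2].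
  assert (B : ball 0 d y).
  { unfold ball; simpl; unfold AbsRing_ball, abs, minus, plus, opp; simpl.
    rewrite Rabs_right; lra. }
  specialize (Hd y B Hy1). unfold ball in Hd; simpl in Hd;
  unfold AbsRing_ball, abs, minus, plus, opp in Hd; simpl in Hd.
  rewrite H0, Rminus_0_r in Hd. exact Hd.
Qed.

Lemma h_lin (h hd : R -> R) :
  (forall z lam, 0 <= z -> 0 < lam < 1 -> lam * h z <= h (lam * z)) ->
  h 0 = 0 ->
  filterlim (fun y => (h y - h 0) / y) (at_right 0) (locally (hd 0)) ->
  forall x, 0 <= x -> h x <= hd 0 * x.
Proof.
  intros Hd H0 Hl x Hx.
  destruct (Req_dec x 0) as [->|Hne]; [rewrite H0; lra|].
  apply Rnot_lt_le; intro C.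
  set (eps := h x / x - hd 0).
  assert (Heps : 0 < eps).
  { unfold eps. apply (Rmult_lt_reg_r x); [lra|]. unfold Rdiv.
    rewrite Rmult_minus_distr_r, Rmult_assoc, Rinv_l; lra. }
  destruct (h_der0_eps h hd H0 Hl eps Heps) as [d [Hd0 Hdd]].
  set (y := Rmin x (d/2)).
  assert (Hy : 0 < y < d) by (unfold y; apply Rmin_case_strong; lra).
  assert (Hyx : y <= x) by (unfold y; apply Rmin_l).
  pose proof (h_ratio h Hd y x ltac:(lra) Hyx) as R1.
  specialize (Hdd y Hy). apply Rabs_def2 in Hdd as [Hd1 Hd2].
  assert (h x / x <= h y / y).
  { apply (Rmult_le_reg_r (x*y)). nra. unfold Rdiv.
    replace (h x * / x * (x * y)) with (y * h x) by (field; lra).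
    replace (h y * / y * (x * y)) with (x * h y) by (field; lra). lra. }
  unfold eps in Hd1. lra.
Qed.

Lemma h_cont (h hd : R -> R) :
  (forall z, 0 < z -> is_derive h z (hd z)) ->
  forall x, 0 < x -> continuous h x.
Proof.
  intros Hh x Hx. apply (ex_derive_continuous (K:=R_AbsRing) (V:=R_NormedModule)). exists (hd x). apply Hh; auto.
Qed.

Lemma h_mono (h hd : R -> R) (zstar : R) :
  (forall z, 0 < z -> is_derive h z (hd z)) ->
  0 < zstar ->
  (forall x y, 0 <= x -> x < y -> y < zstar -> h x < h y) ->
  forall x y, 0 <= x -> x <= y -> y <= zstar -> h x <= h y.
Proof.
  intros Hh Hz Hinc x y Hx Hxy Hy.
  destruct (Req_dec x y) as [->|Hne]; [lra|].
  destruct (Req_dec y zstar) as [->|Hne2]; [|apply Rlt_le, Hinc; lra].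
  apply Rnot_lt_le; intro C.
  pose proof (h_cont h hd Hh zstar Hz) as Hc.
  apply continuity_pt_filterlim in Hc.
  destruct (loc_R _ _ (proj1 (continuity_pt_locally _ _) Hc (mkposreal (h x - h zstar) ltac:(lra)))) as [d [Hd0 Hd]].
  set (y' := Rmax ((x + zstar)/2) (zstar - d/2)).
  assert (Hy' : x < y' < zstar /\ Rabs (y' - zstar) < d).
  { unfold y'; apply Rmax_case_strong; intros; rewrite Rabs_left; lra. }
  specialize (Hd y' (proj2 Hy')). simpl in Hd.
  pose proof (Hinc x y' Hx ltac:(lra) ltac:(lra)).
  apply Rabs_def2 in Hd. lra.
Qed.

Lemma h_bound (h hd : R -> R) (zstar : R) :
  (forall z, 0 < z -> is_derive h z (hd z)) ->
  0 < zstar ->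
  (forall x y, 0 <= x -> x < y -> y < zstar -> h x < h y) ->
  (forall x y, zstar <= x -> x < y -> h y < h x) ->
  forall x, 0 <= x -> h x <= h zstar.
Proof.
  intros Hh Hz Hinc Hdec x Hx.
  destruct (Rle_lt_dec x zstar).
  - apply (h_mono h hd zstar); auto; lra.
  - apply Rlt_le, Hdec; lra.
Qed.

Lemma hd_cont_pt (hd : R -> R) :
  (forall z, 0 <= z ->
      filterlim hd (within (fun y => 0 <= y) (locally z)) (locally (hd z))) ->
  forall z, 0 < z -> continuity_pt hd z.
Proof.
  intros Hc z Hz. apply continuity_pt_locally. intros eps.
  pose proof (Hc z (Rlt_le _ _ Hz) (ball (hd z) eps) (locally_ball _ _)) as H.
  destruct (loc_R _ _ H) as [d [Hd0 Hd]].
  exists (mkposreal (Rmin d z) ltac:(apply Rmin_case; lra)). intros u Hu.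
  unfold ball in Hu; simpl in Hu; unfold AbsRing_ball, abs, minus, plus, opp in Hu; simpl in Hu.
  assert (Hu1 : Rabs (u - z) < d) by (eapply Rlt_le_trans; [exact Hu| apply Rmin_l]).
  assert (Hu2 : Rabs (u - z) < z) by (eapply Rlt_le_trans; [exact Hu| apply Rmin_r]).
  apply Rabs_def2 in Hu2.
  specialize (Hd u Hu1 ltac:(lra)). exact Hd.
Qed.

Lemma h_lip (h hd : R -> R) :
  (forall z, 0 < z -> is_derive h z (hd z)) ->
  (forall z, 0 <= z ->
      filterlim hd (within (fun y => 0 <= y) (locally z)) (locally (hd z))) ->
  forall a b, 0 < a -> a <= b -> exists K, 0 <= K /\
    forall x y, a <= x <= b -> a <= y <= b -> Rabs (h x - h y) <= K * Rabs (x - y).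
Proof.
  intros Hh Hc a b Ha Hab.
  assert (Hcp : forall c, a <= c <= b -> continuity_pt hd c)
    by (intros; apply (hd_cont_pt hd Hc); lra).
  destruct (continuity_ab_maj hd a b Hab Hcp) as [M [HM HMab]].
  destruct (continuity_ab_min hd a b Hab Hcp) as [m [Hm Hmab]].
  exists (Rmax (Rabs (hd M)) (Rabs (hd m))). split.
  { eapply Rle_trans; [apply Rabs_pos|apply Rmax_l]. }
  intros x y Hx Hy.
  destruct (MVT_gen h y x hd) as [c [Hc1 Hc2]].
  - intros t Ht. apply Hh. destruct Ht as [Ht _].
    eapply Rle_lt_trans; [|exact Ht]. apply Rmin_case; lra.
  - intros t Ht. apply continuity_pt_filterlim. apply (h_cont h hd Hh).
    destruct Ht as [Ht _]. eapply Rlt_le_trans; [|exact Ht]. apply Rmin_case; lra.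
  - rewrite Hc2, Rabs_mult.
    apply Rmult_le_compat_r; [apply Rabs_pos|].
    assert (Hcab : a <= c <= b).
    { destruct Hc1 as [Hc1 Hc1']. split.
      eapply Rle_trans; [|exact Hc1]. apply Rmin_case; lra.
      eapply Rle_trans; [exact Hc1'|]. apply Rmax_case; lra. }
    specialize (HM c Hcab). specialize (Hm c Hcab).
    unfold Rabs at 1; destruct (Rcase_abs (hd c)).
    + eapply Rle_trans; [|apply Rmax_r]. unfold Rabs; destruct (Rcase_abs (hd m)); lra.
    + eapply Rle_trans; [|apply Rmax_l]. unfold Rabs; destruct (Rcase_abs (hd M)); lra.
Qed.
Lemma RInt_scal_R (f : R -> R) (a b l : R) : ex_RInt f a b -> RInt (fun x => l * f x) a b = l * RInt f a b.
Proof. intros H. apply (RInt_scal f a b l H). Qed.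
Lemma RInt_minus_R (f g : R -> R) (a b : R) : ex_RInt f a b -> ex_RInt g a b -> RInt (fun x => f x - g x) a b = RInt f a b - RInt g a b.
Proof. intros H1 H2. apply (RInt_minus f g a b H1 H2). Qed.
Lemma ex_RInt_scal_R (f : R -> R) (a b l : R) : ex_RInt f a b -> ex_RInt (fun x => l * f x) a b.
Proof. intros H. apply (ex_RInt_scal f a b l H). Qed.
Lemma ex_RInt_minus_R (f g : R -> R) (a b : R) : ex_RInt f a b -> ex_RInt g a b -> ex_RInt (fun x => f x - g x) a b.
Proof. intros H1 H2. apply (ex_RInt_minus f g a b H1 H2). Qed.

Definition Qc (k ta tb : R) (w c h : R -> R) (z : R) : R :=
  z * k + RInt (fun s => w s * h (z * c s)) ta tb.

Lemma Rabs_le_inv (x a : R) : Rabs x <= a -> - a <= x <= a.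
Proof. unfold Rabs; destruct (Rcase_abs x); intros; lra. Qed.

Lemma exR (ta tb : R) (f : R -> R) : ta <= tb ->
  (forall s, ta <= s <= tb -> continuous f s) -> ex_RInt f ta tb.
Proof.
  intros Hab Hf. apply (ex_RInt_continuous (V:=R_CompleteNormedModule)). rewrite Rmin_left, Rmax_right; auto.
Qed.

Lemma int_ex (ta tb : R) (w c h hd : R -> R) : ta <= tb ->
  (forall s, ta <= s <= tb -> continuous w s) ->
  (forall s, ta <= s <= tb -> continuous c s) ->
  (forall s, ta <= s <= tb -> 0 < c s) ->
  (forall z, 0 < z -> is_derive h z (hd z)) ->
  forall z, 0 <= z -> ex_RInt (fun s => w s * h (z * c s)) ta tb.
Proof.
  intros Hab Hw Hc Hcp Hh z Hz. apply exR; auto. intros s Hs.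
  destruct (Req_dec z 0) as [->|Hne].
  - apply (continuous_ext (fun s => w s * h 0)).
    { intros; rewrite Rmult_0_l; auto. }
    apply (continuous_mult w (fun _ => h 0)). auto. apply continuous_const.
  - apply (continuous_mult w (fun s => h (z * c s))). auto.
    apply (continuous_comp (fun s => z * c s) h).
    apply (continuous_mult (fun _ => z) c). apply continuous_const. auto.
    apply (h_cont h hd Hh). specialize (Hcp s Hs). nra.
Qed.

Lemma int_wc (ta tb : R) (w c : R -> R) : ta <= tb ->
  (forall s, ta <= s <= tb -> continuous w s) ->
  (forall s, ta <= s <= tb -> continuous c s) ->
  ex_RInt (fun s => w s * c s) ta tb.
Proof.
  intros Hab Hw Hc. apply exR; auto. intros s Hs.
  apply (continuous_mult w c); auto.
Qed.

Lemma Q_nonneg (k ta tb : R) (w c h : R -> R) : 0 <= k -> ta <= tb ->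
  ex_RInt (fun s => w s * h (0 * c s)) ta tb ->
  (forall s, ta <= s <= tb -> 0 <= w s) ->
  (forall z, 0 <= z -> 0 <= h z) ->
  (forall s, ta <= s <= tb -> 0 < c s) ->
  forall z, 0 <= z -> ex_RInt (fun s => w s * h (z * c s)) ta tb ->
  0 <= Qc k ta tb w c h z.
Proof.
  intros Hk Hab _ Hw Hh Hc z Hz Hex. unfold Qc.
  apply Rplus_le_le_0_compat. nra.
  apply RInt_ge_0; auto. intros s Hs.
  apply Rmult_le_pos. apply Hw; lra. apply Hh. specialize (Hc s ltac:(lra)). nra.
Qed.

Lemma Q_upper (k ta tb : R) (w c h hd : R -> R) : ta <= tb ->
  (forall s, ta <= s <= tb -> 0 <= w s) ->
  (forall s, ta <= s <= tb -> 0 < c s) ->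
  (forall z lam, 0 <= z -> 0 < lam < 1 -> lam * h z <= h (lam * z)) ->
  h 0 = 0 ->
  filterlim (fun y => (h y - h 0) / y) (at_right 0) (locally (hd 0)) ->
  ex_RInt (fun s => w s * c s) ta tb ->
  forall z, 0 <= z -> ex_RInt (fun s => w s * h (z * c s)) ta tb ->
  Qc k ta tb w c h z <= z * k + hd 0 * z * RInt (fun s => w s * c s) ta tb.
Proof.
  intros Hab Hw Hc Hd H0 Hl Hwc z Hz Hex. unfold Qc.
  apply Rplus_le_compat_l.
  rewrite <- RInt_scal_R by auto.
  apply RInt_le; auto. apply ex_RInt_scal_R; auto.
  intros s Hs. specialize (Hc s ltac:(lra)). specialize (Hw s ltac:(lra)).
  pose proof (h_lin h hd Hd H0 Hl (z * c s) ltac:(nra)). nra.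
Qed.

Lemma Q_bnd (k ta tb zstar : R) (w c h hd : R -> R) : ta <= tb ->
  (forall s, ta <= s <= tb -> 0 <= w s) ->
  (forall s, ta <= s <= tb -> 0 < c s) ->
  (forall z, 0 < z -> is_derive h z (hd z)) ->
  0 < zstar ->
  (forall x y, 0 <= x -> x < y -> y < zstar -> h x < h y) ->
  (forall x y, zstar <= x -> x < y -> h y < h x) ->
  ex_RInt w ta tb ->
  forall z, 0 <= z -> ex_RInt (fun s => w s * h (z * c s)) ta tb ->
  Qc k ta tb w c h z <= z * k + h zstar * RInt w ta tb.
Proof.
  intros Hab Hw Hc Hh Hz Hinc Hdec Hwi z Hz0 Hex. unfold Qc.
  apply Rplus_le_compat_l.
  rewrite <- RInt_scal_R by auto.
  apply RInt_le; auto. apply ex_RInt_scal_R; auto.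
  intros s Hs. specialize (Hc s ltac:(lra)). specialize (Hw s ltac:(lra)).
  pose proof (h_bound h hd zstar Hh Hz Hinc Hdec (z * c s) ltac:(nra)). nra.
Qed.

Lemma Q_lower (k ta tb cmax : R) (w c h : R -> R) : ta <= tb ->
  (forall s, ta <= s <= tb -> 0 <= w s) ->
  (forall s, ta <= s <= tb -> 0 < c s <= cmax) ->
  (forall z lam, 0 <= z -> 0 < lam < 1 -> lam * h z <= h (lam * z)) ->
  ex_RInt (fun s => w s * c s) ta tb ->
  forall z, 0 < z -> ex_RInt (fun s => w s * h (z * c s)) ta tb ->
  z * k + (h (z * cmax) / (z * cmax)) * z * RInt (fun s => w s * c s) ta tb
    <= Qc k ta tb w c h z.
Proof.
  intros Hab Hw Hc Hd Hwc z Hz Hex. unfold Qc.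
  apply Rplus_le_compat_l.
  rewrite <- RInt_scal_R by auto.
  apply RInt_le; auto. apply ex_RInt_scal_R; auto.
  intros s Hs. specialize (Hc s ltac:(lra)). specialize (Hw s ltac:(lra)).
  assert (Hcm : 0 < cmax) by lra.
  pose proof (h_ratio h Hd (z * c s) (z * cmax) ltac:(nra) ltac:(nra)) as R1.
  assert (E : h (z * cmax) / (z * cmax) * z * (w s * c s)
            = w s * ((z * c s) * h (z * cmax) / (z * cmax))) by (field; nra).
  rewrite E. apply Rmult_le_compat_l; auto.
  apply (Rmult_le_reg_r (z * cmax)). nra.
  unfold Rdiv. rewrite Rmult_assoc, Rinv_l by nra. nra.
Qed.

Lemma Q_mono (k ta tb cmax zstar : R) (w c h hd : R -> R) : 0 <= k -> ta <= tb ->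
  (forall s, ta <= s <= tb -> 0 <= w s) ->
  (forall s, ta <= s <= tb -> 0 < c s <= cmax) ->
  (forall z, 0 < z -> is_derive h z (hd z)) ->
  0 < zstar ->
  (forall x y, 0 <= x -> x < y -> y < zstar -> h x < h y) ->
  forall x y, 0 <= x -> x <= y -> y * cmax <= zstar ->
  ex_RInt (fun s => w s * h (x * c s)) ta tb ->
  ex_RInt (fun s => w s * h (y * c s)) ta tb ->
  Qc k ta tb w c h x <= Qc k ta tb w c h y.
Proof.
  intros Hk Hab Hw Hc Hh Hz Hinc x y Hx Hxy Hy Ex Ey. unfold Qc.
  apply Rplus_le_compat. nra.
  apply RInt_le; auto.
  intros s Hs. specialize (Hc s ltac:(lra)). specialize (Hw s ltac:(lra)).
  apply Rmult_le_compat_l; auto.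
  apply (h_mono h hd zstar Hh Hz Hinc); nra.
Qed.

Lemma Q_cont (k ta tb cmin cmax : R) (w c h hd : R -> R) : 0 <= k -> ta <= tb ->
  (forall s, ta <= s <= tb -> continuous w s) ->
  (forall s, ta <= s <= tb -> continuous c s) ->
  (forall s, ta <= s <= tb -> 0 <= w s) ->
  0 < cmin ->
  (forall s, ta <= s <= tb -> cmin <= c s <= cmax) ->
  (forall z, 0 < z -> is_derive h z (hd z)) ->
  (forall z, 0 <= z ->
      filterlim hd (within (fun y => 0 <= y) (locally z)) (locally (hd z))) ->
  forall v, 0 < v -> continuity_pt (Qc k ta tb w c h) v.
Proof.
  intros Hk Hab Hwc Hcc Hw Hcmin Hc Hh Hhd v Hv.
  assert (Hcp : forall s, ta <= s <= tb -> 0 < c s) by (intros s Hs; specialize (Hc s Hs); lra).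
  assert (Hmm : cmin <= cmax) by (destruct (Hc ta ltac:(lra)); lra).
  destruct (h_lip h hd Hh Hhd (v/2 * cmin) (2 * v * cmax) ltac:(nra) ltac:(nra)) as [K [HK HKl]].
  assert (Hwi : ex_RInt w ta tb) by (apply exR; auto).
  assert (HI : 0 <= RInt w ta tb) by (apply RInt_ge_0; auto; intros; apply Hw; lra).
  set (C := k + K * cmax * RInt w ta tb).
  assert (HC : 0 <= C) by (unfold C; assert (0 <= cmax) by lra;
     apply Rplus_le_le_0_compat; auto; apply Rmult_le_pos; auto; apply Rmult_le_pos; auto).
  assert (Lip : forall z, Rabs (z - v) < v / 2 ->
     Rabs (Qc k ta tb w c h z - Qc k ta tb w c h v) <= C * Rabs (z - v)).
  { intros z Hz. pose proof Hz as Hz'. apply Rabs_def2 in Hz'.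
    assert (Ez : ex_RInt (fun s => w s * h (z * c s)) ta tb)
      by (apply (int_ex ta tb w c h hd); auto; lra).
    assert (Ev : ex_RInt (fun s => w s * h (v * c s)) ta tb)
      by (apply (int_ex ta tb w c h hd); auto; lra).
    unfold Qc.
    replace (z * k + RInt (fun s => w s * h (z * c s)) ta tb -
             (v * k + RInt (fun s => w s * h (v * c s)) ta tb))
      with ((z - v) * k + RInt (fun s => w s * h (z * c s) - w s * h (v * c s)) ta tb)
      by ((rewrite RInt_minus_R by auto); ring).
    set (D := K * cmax * Rabs (z - v)).
    assert (HD : 0 <= D) by (unfold D; assert (0 <= cmax) by lra;
       apply Rmult_le_pos; [apply Rmult_le_pos; auto|apply Rabs_pos]).
    assert (Pt : forall s, ta < s < tb ->
       Rabs (w s * h (z * c s) - w s * h (v * c s)) <= D * w s).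
    { intros s Hs. specialize (Hc s ltac:(lra)). specialize (Hw s ltac:(lra)).
      rewrite <- Rmult_minus_distr_l, Rabs_mult, (Rabs_right (w s)) by lra.
      rewrite Rmult_comm. apply Rmult_le_compat_r; auto.
      eapply Rle_trans. apply HKl; split; nra.
      unfold D. rewrite Rmult_assoc. apply Rmult_le_compat_l; auto.
      rewrite <- Rmult_minus_distr_r, Rabs_mult, (Rabs_right (c s)) by lra.
      rewrite Rmult_comm. apply Rmult_le_compat_r. apply Rabs_pos. lra. }
    assert (E1 : ex_RInt (fun s => w s * h (z * c s) - w s * h (v * c s)) ta tb)
      by (apply ex_RInt_minus_R; auto).
    assert (E2 : ex_RInt (fun s => D * w s) ta tb) by (apply ex_RInt_scal_R; auto).
    assert (U : RInt (fun s => w s * h (z * c s) - w s * h (v * c s)) ta tb <= D * RInt w ta tb).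
    { rewrite <- RInt_scal_R by auto. apply RInt_le; auto.
      intros s Hs. specialize (Pt s Hs). apply Rabs_le_inv in Pt. lra. }
    assert (L : - (D * RInt w ta tb) <= RInt (fun s => w s * h (z * c s) - w s * h (v * c s)) ta tb).
    { replace (- (D * RInt w ta tb)) with (RInt (fun s => (- D) * w s) ta tb)
        by (rewrite (RInt_scal_R w ta tb (-D) Hwi); apply eq_sym, Ropp_mult_distr_l).
      apply RInt_le; auto. apply ex_RInt_scal_R; auto.
      intros s Hs. specialize (Pt s Hs). apply Rabs_le_inv in Pt. lra. }
    unfold C. eapply Rle_trans. apply Rabs_triang.
    rewrite Rabs_mult, (Rabs_right k) by lra.
    assert (Rabs (RInt (fun s => w s * h (z * c s) - w s * h (v * c s)) ta tb) <= D * RInt w ta tb)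
      by (apply Rabs_le; lra).
    unfold D in H. nra. }
  apply continuity_pt_locally. intros eps.
  assert (Hd : 0 < Rmin (v/2) (eps / (C + 1)))
    by (apply Rmin_case; [lra| apply Rdiv_lt_0_compat; [apply cond_pos|lra]]).
  exists (mkposreal _ Hd). intros u Hu.
  unfold ball in Hu; simpl in Hu; unfold AbsRing_ball, abs, minus, plus, opp in Hu; simpl in Hu.
  assert (Hu1 : Rabs (u - v) < v/2) by (eapply Rlt_le_trans; [exact Hu| apply Rmin_l]).
  assert (Hu2 : Rabs (u - v) < eps / (C + 1)) by (eapply Rlt_le_trans; [exact Hu| apply Rmin_r]).
  eapply Rle_lt_trans. apply Lip; auto.
  pose proof (cond_pos eps).
  apply (Rmult_lt_compat_l (C + 1)) in Hu2; [|lra].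
  replace ((C + 1) * (eps / (C + 1))) with (pos eps) in Hu2 by (field; lra).
  pose proof (Rabs_pos (u - v)). nra.
Qed.

Lemma iter_S {A : Type} (f : A -> A) (n : nat) (x : A) :
  Nat.iter (S n) f x = f (Nat.iter n f x).
Proof. reflexivity. Qed.

Lemma part2 (k ta tb cmax : R) (w c h hd : R -> R) : 0 < k < 1 -> ta <= tb ->
  (forall s, ta <= s <= tb -> continuous w s) ->
  (forall s, ta <= s <= tb -> continuous c s) ->
  (forall s, ta <= s <= tb -> 0 <= w s) ->
  (forall s, ta <= s <= tb -> 0 < c s <= cmax) ->
  (forall z, 0 <= z -> 0 <= h z) ->
  (forall z, 0 < z -> is_derive h z (hd z)) ->
  filterlim (fun y => (h y - h 0) / y) (at_right 0) (locally (hd 0)) ->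
  h 0 = 0 ->
  (forall z lam, 0 <= z -> 0 < lam < 1 -> lam * h z <= h (lam * z)) ->
  hd 0 * RInt (fun s => w s * c s) ta tb / (1 - k) < 1 ->
  forall u, 0 <= u -> is_lim_seq (fun n => Nat.iter n (Qc k ta tb w c h) u) 0.
Proof.
  intros Hk Hab Hwc Hcc Hw Hc Hnn Hh Hl H0 Hd HL u Hu.
  set (A := RInt (fun s => w s * c s) ta tb) in *.
  set (Q := Qc k ta tb w c h).
  set (q := k + hd 0 * A).
  assert (Hcp : forall s, ta <= s <= tb -> 0 < c s) by (intros s Hs; apply Hc; auto).
  assert (Hq1 : q < 1).
  { unfold q. apply (Rmult_lt_compat_r (1 - k)) in HL; [|lra].
    unfold Rdiv in HL. rewrite Rmult_assoc, Rinv_l in HL by lra. lra. }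
  assert (Hwc' : ex_RInt (fun s => w s * c s) ta tb) by (apply int_wc; auto).
  assert (Ex : forall z, 0 <= z -> ex_RInt (fun s => w s * h (z * c s)) ta tb)
    by (apply (int_ex ta tb w c h hd); auto).
  assert (Bnd : forall z, 0 <= z -> 0 <= Q z <= q * z).
  { intros z Hz. split.
    - apply (Q_nonneg k ta tb w c h); auto; try lra; apply Ex; lra.
    - eapply Rle_trans. apply (Q_upper k ta tb w c h hd); auto.
      apply Req_le; unfold q, A; ring. }
  assert (Hq0 : 0 <= q) by (destruct (Bnd 1 ltac:(lra)); lra).
  assert (Hn : forall n, 0 <= Nat.iter n Q u <= q ^ n * u).
  { induction n as [|n IH].
    - simpl. lra.
    - rewrite iter_S. destruct (Bnd (Nat.iter n Q u) ltac:(lra)) as [B1 B2].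
      split; auto. simpl. eapply Rle_trans; [exact B2|].
      rewrite Rmult_assoc. apply Rmult_le_compat_l; lra. }
  apply is_lim_seq_le_le with (u := fun _ => 0) (w := fun n => q ^ n * u).
  - intros n. apply Hn.
  - apply is_lim_seq_const.
  - replace (Finite 0) with (Rbar_mult (Finite 0) (Finite u)) by (simpl; f_equal; ring).
    apply is_lim_seq_scal_r. apply is_lim_seq_geom. rewrite Rabs_right; lra.
Qed.

Lemma part1 (k ta tb cmin cmax zstar : R) (w c h hd : R -> R) : 0 < k < 1 -> ta <= tb ->
  (forall s, ta <= s <= tb -> continuous w s) ->
  (forall s, ta <= s <= tb -> continuous c s) ->
  (forall s, ta <= s <= tb -> 0 <= w s) ->
  0 < cmin ->
  (forall s, ta <= s <= tb -> cmin <= c s <= cmax) ->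
  (forall z, 0 <= z -> 0 <= h z) ->
  (forall z, 0 < z -> is_derive h z (hd z)) ->
  filterlim (fun y => (h y - h 0) / y) (at_right 0) (locally (hd 0)) ->
  (forall z, 0 <= z ->
      filterlim hd (within (fun y => 0 <= y) (locally z)) (locally (hd z))) ->
  h 0 = 0 ->
  0 < zstar ->
  (forall x y, 0 <= x -> x < y -> y < zstar -> h x < h y) ->
  (forall x y, zstar <= x -> x < y -> h y < h x) ->
  (forall z lam, 0 <= z -> 0 < lam < 1 -> lam * h z <= h (lam * z)) ->
  1 < hd 0 * RInt (fun s => w s * c s) ta tb / (1 - k) ->
  exists ustar, 0 < ustar /\ Qc k ta tb w c h ustar = ustar /\
       (forall v, 0 < v -> Qc k ta tb w c h v = v -> ustar <= v) /\
       (forall u, 0 < u <= ustar -> ustar * cmax <= zstar ->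
          is_lim_seq (fun n => Nat.iter n (Qc k ta tb w c h) u) ustar).
Proof.
  intros Hk Hab Hwc Hcc Hw Hcmin Hc Hnn Hh Hl Hhd H0 Hz Hinc Hdec Hd HL.
  set (A := RInt (fun s => w s * c s) ta tb) in *.
  set (Q := Qc k ta tb w c h).
  assert (Hcp : forall s, ta <= s <= tb -> 0 < c s) by (intros s Hs; specialize (Hc s Hs); lra).
  assert (Hcp' : forall s, ta <= s <= tb -> 0 < c s <= cmax) by (intros s Hs; specialize (Hc s Hs); lra).
  assert (Hcmax : 0 < cmax) by (destruct (Hc ta ltac:(lra)); lra).
  assert (HA1 : 1 - k < hd 0 * A).
  { apply (Rmult_lt_compat_r (1 - k)) in HL; [|lra].
    unfold Rdiv in HL. rewrite Rmult_assoc, Rinv_l in HL by lra. lra. }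
  assert (Hwc' : ex_RInt (fun s => w s * c s) ta tb) by (apply int_wc; auto).
  assert (Hwi : ex_RInt w ta tb) by (apply exR; auto).
  assert (HI : 0 <= RInt w ta tb) by (apply RInt_ge_0; auto; intros; apply Hw; lra).
  assert (HA0 : 0 <= A).
  { apply RInt_ge_0; auto. intros s Hs. specialize (Hcp s ltac:(lra)).
    specialize (Hw s ltac:(lra)). nra. }
  assert (HA : 0 < A).
  { destruct HA0 as [?|HA0]; auto. rewrite <- HA0 in HA1. lra. }
  assert (Ex : forall z, 0 <= z -> ex_RInt (fun s => w s * h (z * c s)) ta tb)
    by (apply (int_ex ta tb w c h hd); auto).
  assert (Cont : forall v, 0 < v -> continuity_pt Q v)
    by (apply (Q_cont k ta tb cmin cmax w c h hd); auto; lra).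
  assert (ContF : forall v, 0 < v -> continuity_pt (fun z => z - Q z) v).
  { intros v Hv. apply continuity_pt_minus. apply continuity_pt_id. auto. }
  assert (Small : exists d1, 0 < d1 /\ forall z, 0 < z <= d1 -> z < Q z).
  { set (eps := (hd 0 * A - (1 - k)) / (2 * A)).
    assert (Heps : 0 < eps) by (unfold eps; apply Rdiv_lt_0_compat; lra).
    destruct (h_der0_eps h hd H0 Hl eps Heps) as [d [Hd0 Hdd]].
    exists (d / (2 * cmax)). split. apply Rdiv_lt_0_compat; lra.
    intros z [Hz1 Hz2].
    assert (Hy : 0 < z * cmax < d).
    { split. nra. apply (Rmult_le_compat_r cmax) in Hz2; [|lra].
      replace (d / (2 * cmax) * cmax) with (d / 2) in Hz2 by (field; lra). lra. }
    specialize (Hdd _ Hy). apply Rabs_def2 in Hdd as [Hdd1 Hdd2].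
    pose proof (Q_lower k ta tb cmax w c h Hab Hw Hcp' Hd Hwc' z Hz1 (Ex z ltac:(lra))) as QL.
    fold A in QL. fold Q in QL.
    assert (E : (hd 0 - eps) * A = (hd 0 * A + (1 - k)) / 2) by (unfold eps; field; lra).
    set (r := h (z * cmax) / (z * cmax)) in *.
    assert (r * A > (hd 0 - eps) * A) by (apply Rmult_lt_compat_r; lra).
    assert (r * z * A > (1 - k) * z) by nra.
    lra. }
  destruct Small as [d1 [Hd1 Hsmall]].
  assert (Between : forall a b, 0 < a < b -> a < Q a -> Q b < b ->
            exists z, a <= z <= b /\ Q z = z).
  { intros a b Hab' Ha Hb.
    destruct (Ranalysis5.IVT_interv (fun z => z - Q z) a b) as [z [Hz1 Hz2]].
    - intros x Hx. apply ContF. lra.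
    - lra.
    - lra.
    - lra.
    - exists z. split; auto. lra. }
  set (z1 := h zstar * RInt w ta tb / (1 - k) + d1 + 1).
  assert (Hhz : 0 <= h zstar) by (apply Hnn; lra).
  assert (Hz1 : d1 < z1).
  { unfold z1. assert (0 <= h zstar * RInt w ta tb / (1 - k)).
    { apply Rmult_le_pos. nra. left. apply Rinv_0_lt_compat. lra. } lra. }
  assert (Qz1 : Q z1 < z1).
  { eapply Rle_lt_trans. apply (Q_bnd k ta tb zstar w c h hd); auto. lra. apply Ex; lra.
    assert (E : z1 * (1 - k) = h zstar * RInt w ta tb + (d1 + 1) * (1 - k))
      by (unfold z1; field; lra).
    assert (0 < (d1 + 1) * (1 - k)) by (apply Rmult_lt_0_compat; lra).
    nra. }
  destruct (Between d1 z1 ltac:(lra) (Hsmall d1 ltac:(lra)) Qz1) as [z0 [Hz0 Qz0]].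
  assert (FixBig : forall v, 0 < v -> Q v = v -> d1 < v).
  { intros v Hv Qv. destruct (Rle_lt_dec v d1); auto.
    specialize (Hsmall v ltac:(lra)). lra. }
  set (E := fun x => 0 < - x /\ Q (- x) = - x).
  assert (Eb : bound E).
  { exists (- d1). intros x [Hx1 Hx2]. specialize (FixBig _ Hx1 Hx2). lra. }
  assert (Ene : exists x, E x).
  { exists (- z0). unfold E. rewrite Ropp_involutive. split; lra. }
  destruct (completeness E Eb Ene) as [m [Hm1 Hm2]].
  assert (Hmd : m <= - d1).
  { apply Hm2. intros x [Hx1 Hx2]. specialize (FixBig _ Hx1 Hx2). lra. }
  assert (Min : forall v, 0 < v -> Q v = v -> - m <= v).
  { intros v Hv Qv. assert (E (- v)) by (unfold E; rewrite Ropp_involutive; auto).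
    specialize (Hm1 _ H). lra. }
  assert (Fix : Q (- m) = - m).
  { apply NNPP; intro Hne.
    assert (Hf : 0 < Rabs (- m - Q (- m))) by (apply Rabs_pos_lt; lra).
    pose proof (ContF (- m) ltac:(lra)) as Cf.
    destruct (loc_R _ _ (proj1 (continuity_pt_locally _ _) Cf (mkposreal _ Hf))) as [d [Hd0' Hdd]].
    simpl in Hdd.
    destruct (classic (exists x, E x /\ m - d/2 < x)) as [[x [[Hx1 Hx2] Hx3]]|Hno].
    - specialize (Hm1 x (conj Hx1 Hx2)).
      assert (Rabs (- x - - m) < d) by (rewrite Rabs_right; lra).
      specialize (Hdd _ H). rewrite Hx2 in Hdd.
      replace (- x - - x) with 0 in Hdd by ring. rewrite Rminus_0_l, Rabs_Ropp in Hdd. lra.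
    - assert (m <= m - d/2).
      { apply Hm2. intros x Hx. apply Rnot_lt_le. intro C. apply Hno. exists x. auto. }
      lra. }
  exists (- m). split; [lra|]. split; [exact Fix|]. split; [exact Min|].
  intros u Hu Hzs.
  set (us := - m) in *.
  assert (Above : forall v, 0 < v < us -> v < Q v).
  { intros v Hv. destruct (Rle_lt_dec v d1). apply Hsmall; lra.
    apply Rnot_le_lt. intros Hq. destruct Hq as [Hq|Hq].
    - destruct (Between d1 v ltac:(lra) (Hsmall d1 ltac:(lra)) Hq) as [z [Hz' Qz]].
      specialize (Min z ltac:(lra) Qz). lra.
    - specialize (Min v ltac:(lra) Hq). lra. }
  assert (Le : forall v, 0 < v <= us -> v <= Q v).
  { intros v Hv. destruct (Req_dec v us) as [->|Hne]. fold us in Fix. lra.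
    left. apply Above. lra. }
  assert (Mono : forall x y, 0 <= x -> x <= y -> y <= us -> Q x <= Q y).
  { intros x y Hx Hxy Hy. apply (Q_mono k ta tb cmax zstar w c h hd); auto; try lra.
    apply Rle_trans with (us * cmax); auto. apply Rmult_le_compat_r; lra.
    all: try (apply Ex; lra). }
  set (x := fun n => Nat.iter n Q u).
  assert (Inv : forall n, u <= x n <= us /\ x n <= x (S n)).
  { induction n as [|n [[IH1 IH2] IH3]].
    - unfold x; simpl. split. lra. apply Le. lra.
    - assert (XS : x (S n) = Q (x n)) by reflexivity.
      assert (x (S n) <= us).
      { rewrite XS. fold us in Fix. rewrite <- Fix. apply Mono; lra. }
      split. lra.
      assert (XSS : x (S (S n)) = Q (x (S n))) by reflexivity.
      rewrite XSS. apply Le. lra. }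
  destruct (growing_cv x) as [l Hlim].
  { intros n. apply Inv. }
  { exists us. intros y [n ->]. apply Inv. }
  apply is_lim_seq_Reals in Hlim.
  assert (Hlu : u <= l).
  { pose proof (is_lim_seq_le (fun _ => u) x u l (fun n => proj1 (proj1 (Inv n)))
        (is_lim_seq_const u) Hlim). simpl in H. exact H. }
  assert (Hlus : l <= us).
  { pose proof (is_lim_seq_le x (fun _ => us) l us (fun n => proj2 (proj1 (Inv n)))
        Hlim (is_lim_seq_const us)). simpl in H. exact H. }
  assert (HQl : Q l = l).
  { pose proof (is_lim_seq_continuous Q x l (Cont l ltac:(lra)) Hlim) as H1.
    pose proof (proj1 (is_lim_seq_incr_1 x l) Hlim) as H2.
    apply is_lim_seq_unique in H1. apply is_lim_seq_unique in H2.
    change (fun n => Q (x n)) with (fun n => x (S n)) in H1.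
    rewrite H1 in H2. injection H2. auto. }
  specialize (Min l ltac:(lra) HQl).
  replace us with l by lra. exact Hlim.
Qed.

Lemma cR_mult (f g : R -> R) x : continuous f x -> continuous g x -> continuous (fun y => f y * g y) x.
Proof. intros; apply (continuous_mult f g); auto. Qed.
Lemma cR_minus (f g : R -> R) x : continuous f x -> continuous g x -> continuous (fun y => f y - g y) x.
Proof. intros; apply (continuous_minus f g); auto. Qed.
Lemma cR_opp (f : R -> R) x : continuous f x -> continuous (fun y => - f y) x.
Proof. intros; apply (continuous_opp f); auto. Qed.
Lemma cR_comp (f g : R -> R) x : continuous f x -> continuous g (f x) -> continuous (fun y => g (f y)) x.
Proof. intros; apply (continuous_comp f g); auto. Qed.
Lemma cR_exp x : continuous exp x.
Proof. apply (ex_derive_continuous (K:=R_AbsRing) (V:=R_NormedModule)). exists (exp x). apply is_derive_exp. Qed.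
Lemma cR_const (a x : R) : continuous (fun _ : R => a) x.
Proof. apply continuous_const. Qed.
Lemma cR_id (x : R) : continuous (fun y : R => y) x.
Proof. apply continuous_id. Qed.
Lemma cR_der (f : R -> R) x : ex_derive f x -> continuous f x.
Proof. apply (ex_derive_continuous (K:=R_AbsRing) (V:=R_NormedModule)). Qed.

Lemma exp_le (x y : R) : x <= y -> exp x <= exp y.
Proof. intros [H|H]. left; apply exp_increasing; auto. subst; lra. Qed.

Lemma RInt_Chasles_R (f : R -> R) a b c : ex_RInt f a b -> ex_RInt f b c ->
  RInt f a b + RInt f b c = RInt f a c.
Proof. intros; apply (RInt_Chasles f a b c); auto. Qed.

Definition Prim (d : R -> R) (y : R) : R := RInt d 0 y.

Lemma prim (d : R -> R) : (forall x, continuous d x) -> (forall x, 0 < d x) ->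
  (forall a b, RInt d a b = Prim d b - Prim d a) /\
  (forall x, continuous (Prim d) x) /\
  (forall x y, x <= y -> Prim d x <= Prim d y) /\
  (forall x y, x < y -> Prim d x < Prim d y) /\ Prim d 0 = 0.
Proof.
  intros Hc Hp. unfold Prim.
  assert (Ex : forall a b, ex_RInt d a b)
    by (intros; apply (ex_RInt_continuous (V:=R_CompleteNormedModule)); auto).
  assert (Ch : forall a b, @eq R (RInt d a b) (RInt d 0 b - RInt d 0 a)).
  { intros a b. rewrite <- (RInt_Chasles_R d 0 a b) by auto. unfold Rminus; rewrite Rplus_comm, <- Rplus_assoc, Rplus_opp_l, Rplus_0_l; reflexivity. }
  split; [exact Ch|]. split.
  { intros x. apply cR_der. exists (d x).
    apply (is_derive_RInt d (fun y => RInt d 0 y) 0 x); auto.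
    exists (mkposreal 1 Rlt_0_1). intros y _. apply (RInt_correct (V:=R_CompleteNormedModule)). auto. }
  split.
  - intros x y Hxy. assert (0 <= RInt d x y) by (apply RInt_ge_0; auto; intros; left; auto).
    rewrite Ch in H. lra.
  - split.
    + intros x y Hxy. assert (0 < RInt d x y) by (apply RInt_gt_0; auto).
      rewrite Ch in H. lra.
    + pose proof (Ch 0 0). lra.
Qed.

Lemma phi_ge (tau : R -> R) (ta s : R) :
  isC1 tau -> (forall t, Derive tau t < 1) -> ta <= s -> ta - tau ta <= s - tau s.
Proof.
  intros Hc Hb Hs.
  destruct (MVT_gen (fun s => s - tau s) ta s (fun x => 1 - Derive tau x)) as [c0 [Hc0 Hm]].
  - intros x _. apply (is_derive_minus (K:=R_AbsRing) (V:=R_NormedModule) (fun t => t) tau x 1 (Derive tau x)).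
    apply (is_derive_id (K:=R_AbsRing)). apply Derive_correct. apply Hc.
  - intros x _. apply continuity_pt_filterlim. apply cR_minus. apply cR_id. apply cR_der, Hc.
  - cbv beta in Hm. specialize (Hb c0). nra.
Qed.

Theorem theorem3p1
  (T : R) (dM dI DI tau p h hd : R -> R)
  (alpha beta ta tb zstar : R)
  (HT : 0 < T)
  (HdM : isC1 dM /\ periodic T dM /\ forall t, 0 < dM t)
  (HdI : isC1 dI /\ periodic T dI /\ forall t, 0 < dI t)
  (HDI : isC1 DI /\ periodic T DI /\ forall t, 0 <= DI t)
  (Htau : isC1 tau /\ periodic T tau /\ forall t, 0 < tau t)
  (Hp : isC1 p /\ periodic T p /\ forall t, 0 <= p t)
  (Hh_nonneg : forall z, 0 <= z -> 0 <= h z)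
  (Hh_der : forall z, 0 < z -> is_derive h z (hd z))
  (Hh_der0 : filterlim (fun y => (h y - h 0) / y) (at_right 0) (locally (hd 0)))
  (Hhd_cont : forall z, 0 <= z ->
      filterlim hd (within (fun y => 0 <= y) (locally z)) (locally (hd z)))
  (Ha_order : 0 < alpha /\ alpha <= beta /\ beta < ta /\ ta <= tb /\ tb < T)
  (Ha_ta : ta - tau ta = alpha)
  (Ha_tb : tb - tau tb = beta)
  (Ha_p : forall t, (0 <= t <= alpha \/ beta <= t <= T) -> p t = 0)
  (Hb : forall t, Derive tau t < 1)
  (Hc0 : h 0 = 0)
  (Hc_lim : is_lim h p_infty 0)
  (Hc_z : 0 < zstar)
  (Hc_inc : forall x y, 0 <= x -> x < y -> y < zstar -> h x < h y)
  (Hc_dec : forall x y, zstar <= x -> x < y -> h y < h x)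
  (Hd : forall z lam, 0 <= z -> 0 < lam < 1 -> lam * h z <= h (lam * z)) :
  let Q := Qbar T ta tb dM dI tau p h in
  let L := Lnum T ta tb dM dI tau p (hd 0) in
  (1 < L ->
     exists ustar, 0 < ustar /\ Q ustar = ustar /\
       (forall v, 0 < v -> Q v = v -> ustar <= v) /\
       (forall u, 0 < u <= ustar -> ustar * kM dM alpha 0 <= zstar ->
          is_lim_seq (fun n => Nat.iter n Q u) ustar)) /\
  (L < 1 -> forall u, 0 <= u -> is_lim_seq (fun n => Nat.iter n Q u) 0).
Proof.
  intros Q L.
  destruct HdM as [HdM1 [_ HdM3]]. destruct HdI as [HdI1 [_ HdI3]].
  destruct Htau as [Htau1 [_ Htau3]]. destruct Hp as [Hp1 [_ Hp3]].
  assert (dMc : forall x, continuous dM x) by (intros; apply cR_der, HdM1).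
  assert (dIc : forall x, continuous dI x) by (intros; apply cR_der, HdI1).
  destruct (prim dM dMc HdM3) as [FCh [Fc [Fle [Flt F0]]]].
  destruct (prim dI dIc HdI3) as [GCh [Gc _]].
  assert (kMe : forall t s, kM dM t s = exp (- (Prim dM t - Prim dM s)))
    by (intros; unfold kM; rewrite FCh; reflexivity).
  assert (epse : forall s, eps dI tau s = exp (- (Prim dI s - Prim dI (s - tau s))))
    by (intros; unfold eps; rewrite GCh; reflexivity).
  assert (tauc : forall x, continuous tau x) by (intros; apply cR_der, Htau1).
  assert (Dtc : forall x, continuous (Derive tau) x) by (intros; apply Htau1).
  assert (pc : forall x, continuous p x) by (intros; apply cR_der, Hp1).
  set (k := kM dM T 0).
  assert (Hk : 0 < k < 1).
  { unfold k. rewrite kMe. split. apply exp_pos. rewrite <- exp_0. apply exp_increasing.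
    pose proof (Flt 0 T HT). lra. }
  set (w := fun s => kM dM T s * gfun dI tau p s).
  set (c := fun s => kM dM (s - tau s) 0).
  assert (Hwc : forall s, continuous w s).
  { intros s.
    apply (continuous_ext (fun s => exp (- (Prim dM T - Prim dM s)) *
       ((1 - Derive tau s) * exp (- (Prim dI s - Prim dI (s - tau s))) * p (s - tau s)))).
    { intros x. unfold w, gfun. rewrite kMe, epse. reflexivity. }
    apply cR_mult.
    - apply (cR_comp (fun s => - (Prim dM T - Prim dM s)) exp). 
      apply cR_opp, cR_minus. apply cR_const. apply Fc. apply cR_exp.
    - apply cR_mult. apply cR_mult. apply cR_minus. apply cR_const. apply Dtc.
      apply (cR_comp (fun s => - (Prim dI s - Prim dI (s - tau s))) exp).
      apply cR_opp, cR_minus. apply Gc.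
      apply (cR_comp (fun s => s - tau s) (Prim dI)). apply cR_minus. apply cR_id. apply tauc.
      apply Gc. apply cR_exp.
      apply (cR_comp (fun s => s - tau s) p). apply cR_minus. apply cR_id. apply tauc.
      apply pc. }
  assert (Hcc : forall s, continuous c s).
  { intros s.
    apply (continuous_ext (fun s => exp (- (Prim dM (s - tau s) - Prim dM 0)))).
    { intros x. unfold c. rewrite kMe. reflexivity. }
    apply (cR_comp (fun s => - (Prim dM (s - tau s) - Prim dM 0)) exp).
    apply cR_opp, cR_minus. 
    apply (cR_comp (fun s => s - tau s) (Prim dM)). apply cR_minus. apply cR_id. apply tauc.
    apply Fc. apply cR_const. apply cR_exp. }
  assert (Hw0 : forall s, 0 <= w s).
  { intros s. unfold w, gfun. rewrite epse. pose proof (Hb s). pose proof (Hp3 (s - tau s)).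
    unfold kM. pose proof (exp_pos (- RInt dM s T)).
    pose proof (exp_pos (- (Prim dI s - Prim dI (s - tau s)))).
    apply Rmult_le_pos. lra. apply Rmult_le_pos; auto. apply Rmult_le_pos; lra. }
  destruct Ha_order as [Ha1 [Ha2 [Ha3 [Ha4 Ha5]]]].
  set (cmin := exp (- (Prim dM tb - Prim dM 0))).
  assert (Hcb : forall s, ta <= s <= tb -> cmin <= c s <= kM dM alpha 0).
  { intros s Hs. pose proof (phi_ge tau ta s Htau1 Hb (proj1 Hs)). pose proof (Htau3 s).
    unfold c, cmin. rewrite !kMe. split; apply exp_le; apply Ropp_le_contravar;
    apply Rplus_le_compat_r; apply Fle; lra. }
  assert (HLeq : L = hd 0 * RInt (fun s => w s * c s) ta tb / (1 - k)).
  { unfold L, Lnum. fold k.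
    assert (Hext : RInt (fun s => gfun dI tau p s * hd 0 / kM dM s (s - tau s)) ta tb
                 = RInt (fun s => (hd 0 / k) * (w s * c s)) ta tb).
    { assert (Pt : forall x, @eq R (gfun dI tau p x * hd 0 / kM dM x (x - tau x))
                                   (hd 0 / k * (w x * c x))).
      2: { apply (RInt_ext (V:=R_CompleteNormedModule)). intros x _. apply Pt. }
      intros x.
      unfold w, c, k. rewrite !kMe.
      assert (E1 : exp (- (Prim dM T - Prim dM x)) * exp (- (Prim dM (x - tau x) - Prim dM 0))
                   * exp (- (Prim dM x - Prim dM (x - tau x))) = exp (- (Prim dM T - Prim dM 0))).
      { rewrite <- !exp_plus. f_equal. ring. }
      rewrite <- E1. field.
      repeat split; apply Rgt_not_eq, exp_pos. }
    rewrite Hext, RInt_scal_R.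
    - field. lra.
    - apply int_wc; auto. }
  assert (Hcmin : 0 < cmin) by apply exp_pos.
  split.
  - intros HL1. rewrite HLeq in HL1.
    exact (part1 k ta tb cmin (kM dM alpha 0) zstar w c h hd Hk Ha4
      (fun s _ => Hwc s) (fun s _ => Hcc s) (fun s _ => Hw0 s) Hcmin Hcb
      Hh_nonneg Hh_der Hh_der0 Hhd_cont Hc0 Hc_z Hc_inc Hc_dec Hd HL1).
  - intros HL1. rewrite HLeq in HL1.
    assert (Hcb' : forall s, ta <= s <= tb -> 0 < c s <= kM dM alpha 0)
      by (intros s Hs; specialize (Hcb s Hs); lra).
    exact (part2 k ta tb (kM dM alpha 0) w c h hd Hk Ha4
      (fun s _ => Hwc s) (fun s _ => Hcc s) (fun s _ => Hw0 s) Hcb'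
      Hh_nonneg Hh_der Hh_der0 Hc0 Hd HL1).
Qed.
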